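(* Consider $n$ robots initially placed at distinct nodes of the infinite grid $\mathbb{Z}\times\mathbb{Z}$ together with a finite set $M$ of meeting nodes, in the model described in the context. Suppose the initial configuration $C(0)$ belongs to $\mathcal{I}_3^{b3}\cup\mathcal{I}_4^{b3}$. Then the gathering over Weber nodes problem cannot be solved from $C(0)$: there is no deterministic distributed algorithm guaranteeing that, from $C(0)$, all robots eventually gather (and remain) at a single node that is a Weber node of $C(0)$.
   Context: Model: robots are anonymous, homogeneous (all run the same deterministic algorithm), oblivious, silent, with no agreement on a global coordinate system or on chirality, and with unlimited visibility. They operate in Look-Compute-Move cycles under a fair asynchronous scheduler; in a cycle a robot either stays or moves to an adjacent grid node, moves being instantaneous. Robots have global strong multiplicity detection (they see the exact number of robots on every node) and see the meeting nodes. Let $d$ be the grid (shortest path) distance, $\lambda_t(v)$ the number of robots at node $v$ at time $t$, $c_t(m)=\sum_v d(v,m)\lambda_t(v)$, and $W(t)$ the set of meeting nodes $m\in M$ minimizing $c_t(m)$ (the Weber nodes). A symmetry of $M$ is a grid automorphism (reflection or rotation) mapping $M$ to itself; a symmetry of the configuration $C(t)$ is a grid automorphism $\phi$ preserving meeting nodes and satisfying $\lambda_t(\phi(v))=\lambda_t(v)$ for all $v$. Class $\mathcal{I}_3^{b3}$: $M$ admits a unique line of (reflection) symmetry $l$, $|W(t)|\ge 2$, $C(t)$ is symmetric with respect to $l$, and there is no Weber node and no robot on $l$ (there may be meeting nodes on $l$). Class $\mathcal{I}_4^{b3}$: $M$ admits rotational symmetry with center $c$, $|W(t)|\ge 2$,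 $C(t)$ is symmetric with respect to that rotational symmetry, and there is neither a meeting node nor a robot on $c$. *)

(* Defs.v *)
From mathcomp Require Import all_boot all_order all_algebra.
Set Implicit Arguments. Unset Strict Implicit. Unset Printing Implicit Defensive.
Import Order.TTheory GRing.Theory Num.Theory.
Local Open Scope ring_scope.

Definition node := (int * int)%type.

Definition nadd (u v : node) : node := (u.1 + v.1, u.2 + v.2).

Definition gdist (u v : node) : nat := (`|u.1 - v.1|%N + `|u.2 - v.2|%N)%N.

(* linear grid automorphisms (the 8 elements of D4):
   optional swap of coordinates, then optional sign changes *)
Definition orient := (bool * bool * bool)%type.
Definition lin (o : orient) (v : node) : node :=
  let: (s, nx, ny) := o in
  let: (x, y) := if s then (v.2, v.1) else (v.1, v.2) in
  ((if nx then - x else x), (if ny then - y else y)).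

Record gaut := GAut { g_lin : orient; g_tr : node }.
Definition gapp (f : gaut) (v : node) : node := nadd (lin (g_lin f) v) (g_tr f).

Definition det_neg (o : orient) : bool := let: (s, nx, ny) := o in s (+) nx (+) ny.

(* a reflection: orientation reversing and involutive (excludes glide reflections) *)
Definition is_reflection (f : gaut) : Prop :=
  det_neg (g_lin f) /\ forall v, gapp f (gapp f v) = v.
Definition is_rotation (f : gaut) : Prop :=
  ~~ det_neg (g_lin f) /\ g_lin f <> (false, false, false).

Section Config.
Variable n : nat.
Implicit Types (pos : 'I_n -> node) (M : seq node).

Definition lam pos (v : node) : nat := #|[pred i : 'I_n | pos i == v]|.

Definition occupied pos : seq node := undup [seq pos i | i <- enum 'I_n].

Definition cost pos (m : node) : nat :=
  \sum_(v <- occupied pos) (gdist v m * lam pos v)%N.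

Definition weber M pos (w : node) : bool :=
  (w \in M) && all (fun m => cost pos w <= cost pos m)%N M.

Definition weber_ge2 M pos : Prop :=
  exists w1 w2, [/\ w1 != w2, weber M pos w1 & weber M pos w2].

Definition sym_M M (f : gaut) : Prop := forall v, (gapp f v \in M) = (v \in M).

Definition sym_conf M pos (f : gaut) : Prop :=
  sym_M M f /\ forall v, lam pos (gapp f v) = lam pos v.

(* class I_3^{b3}; the grid nodes on the line l are the nodes fixed by the reflection *)
Definition class_I3b3 M pos : Prop :=
  exists f, is_reflection f /\ sym_M M f /\
    (forall f', is_reflection f' -> sym_M M f' -> forall v, gapp f' v = gapp f v) /\
    weber_ge2 M pos /\ sym_conf M pos f /\
    (forall v, gapp f v = v -> ~~ weber M pos v /\ lam pos v = 0%N).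

(* class I_4^{b3}; the center c is a grid node iff it is a node fixed by the rotation *)
Definition class_I4b3 M pos : Prop :=
  exists f, [/\ is_rotation f, sym_M M f, weber_ge2 M pos, sym_conf M pos f &
    (forall v, gapp f v = v -> v \notin M /\ lam pos v = 0%N)].

End Config.

(* possible moves, in the robot's local coordinates *)
Inductive dir := Stay | Up | Down | Left | Right.
Definition dvec (d : dir) : node :=
  match d with
  | Stay => (0, 0) | Up => (0, 1) | Down => (0, -1)
  | Left => (-1, 0) | Right => (1, 0)
  end.

(* A deterministic, oblivious algorithm common to all (anonymous) robots:
   from a snapshot expressed in the robot's local coordinate system
   (origin = its own position), i.e. the multiplicity of every node and
   which nodes are meeting nodes, it computes a move. *)
Definition algorithm := (node -> nat) -> (node -> bool) -> dir.

Section Exec.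
Variables (n : nat) (algo : algorithm) (M : seq node).
(* local orientation of each robot (no common axes nor chirality) *)
Variable frame : 'I_n -> orient.

Record state := St { st_pos : 'I_n -> node; st_pending : 'I_n -> option node }.

Definition snapshot_target (pos : 'I_n -> node) (i : 'I_n) : node :=
  let o := frame i in
  let p := pos i in
  nadd p (lin o (dvec (algo (fun v => lam pos (nadd p (lin o v)))
                            (fun v => nadd p (lin o v) \in M)))).

(* ASYNC activation of robot i: if it has no pending move it performs
   Look+Compute (storing its destination); otherwise it performs its
   (instantaneous) Move to the destination computed at its last Look. *)
Definition step (st : state) (i : 'I_n) : state :=
  match st_pending st i with
  | Some q => St (fun j => if j == i then q else st_pos st j)
                 (fun j => if j == i then None else st_pending st j)
  | None => St (st_pos st)
                 (fun j => if j == i then Some (snapshot_target (st_pos st) i)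
                           else st_pending st j)
  end.

Fixpoint exec (sched : nat -> 'I_n) (pos0 : 'I_n -> node) (t : nat) : state :=
  match t with
  | 0 => St pos0 (fun _ => None)
  | t'.+1 => step (exec sched pos0 t') (sched t')
  end.

End Exec.

Definition fair n (sched : nat -> 'I_n) : Prop :=
  forall (i : 'I_n) (t : nat), exists t', (t <= t')%N /\ sched t' = i.

Definition solves_gathering n (algo : algorithm) (M : seq node) (pos0 : 'I_n -> node) : Prop :=
  forall (frame : 'I_n -> orient) (sched : nat -> 'I_n), fair sched ->
    exists w, weber M pos0 w /\
      exists T, forall t, (T <= t)%N -> forall i,
        st_pos (exec algo M frame sched pos0 t) i = w.

(* Main.v *)
Require Import Defs.
From mathcomp Require Import all_boot all_order all_algebra zify.
From Stdlib Require Import FunctionalExtensionality.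
Set Implicit Arguments. Unset Strict Implicit.
Import Order.TTheory GRing.Theory Num.Theory.

Lemma lin_add o u v : lin o (nadd u v) = nadd (lin o u) (lin o v).
Proof.
case: o => [[s nx] ny]; case: u => a b; case: v => c d.
by case: s; case: nx; case: ny; rewrite /lin /nadd /=; congr (_,_); lia.
Qed.

Lemma lin_id u : lin (false,false,false) u = u.
Proof. by case: u. Qed.

Lemma lin_inj o : injective (lin o).
Proof.
case: o => [[s nx] ny] [a b] [c d].
by case: s; case: nx; case: ny; rewrite /lin /=; case=> h1 h2; congr (_,_); lia.
Qed.

Lemma gapp_inj g : injective (gapp g).
Proof.
move=> x y; rewrite /gapp /nadd => h; apply: (@lin_inj (g_lin g)).
move: h; case: (lin _ x) => a b; case: (lin _ y) => c d.
case: (g_tr g) => p q /= [h1 h2].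
by congr (_,_); lia.
Qed.

Lemma gapp_nadd g p u : nadd (gapp g p) (lin (g_lin g) u) = gapp g (nadd p u).
Proof.
rewrite /gapp lin_add; case: (lin _ p) => a b; case: (lin _ u) => c d.
by case: (g_tr g) => e f; rewrite /nadd /=; congr (_,_); lia.
Qed.

Definition schedn n (h : (0 < n)%N) (t : nat) : 'I_n := Ordinal (ltn_pmod t h).

Lemma sched_val n (h : (0 < n)%N) m k : n %| m -> (k < n)%N -> val (schedn h (m + k)) = k.
Proof. by move=> /dvdnP [q ->] hk /=; rewrite modnMDl modn_small. Qed.

Lemma look n (h : (0 < n)%N) algo M frame pos0 m P : n %| m ->
  exec algo M frame (schedn h) pos0 m = St P (fun _ => None) ->
  forall k, (k <= n)%N -> exec algo M frame (schedn h) pos0 (m + k) =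
    St P (fun j => if (j < k)%N then Some (snapshot_target algo M frame P j) else None).
Proof.
move=> hm he; elim=> [|k IH] hk.
  by rewrite addn0 he; congr St; apply: functional_extensionality => j.
have hs := sched_val h hm hk.
rewrite addnS /= IH ?(ltnW hk) // /step /=.
have hs' : (m + k) %% n = k by exact: hs.
rewrite hs' ltnn.
congr St; apply: functional_extensionality => j.
have e : (j == schedn h (m+k)) = (val j == k) by rewrite -(inj_eq val_inj) /= hs'.
rewrite e; case: (ltngtP j k) => hjk.
- by rewrite ltnS ltnW // ?(ltn_eqF hjk).
- by rewrite ltnS leqNgt hjk /= ?(gtn_eqF hjk).
- by rewrite hjk ?eqxx ltnSn; congr (Some (snapshot_target _ _ _ _ _)); apply: val_inj; rewrite /= hs'.
Qed.

Lemma move n (h : (0 < n)%N) algo M frame pos0 m P : n %| m ->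
  exec algo M frame (schedn h) pos0 m = St P (fun _ => None) ->
  forall k, (k <= n)%N -> exec algo M frame (schedn h) pos0 (m + n + k) =
    St (fun j => if (j < k)%N then snapshot_target algo M frame P j else P j)
       (fun j => if (j < k)%N then None else Some (snapshot_target algo M frame P j)).
Proof.
move=> hm he; elim=> [|k IH] hk.
  rewrite addn0 (look hm he (leqnn n)); congr St; apply: functional_extensionality => j //.
  by rewrite ltn_ord.
have hmn : n %| m + n by rewrite dvdn_addl.
have hs := sched_val h hmn hk.
rewrite addnS /= IH ?(ltnW hk) // /step /=.
have hs' : (m + n + k) %% n = k by exact: hs.
rewrite hs' ltnn.
congr St; apply: functional_extensionality => j;
(have e : (j == schedn h (m+n+k)) = (val j == k) by rewrite -(inj_eq val_inj) /= hs');
rewrite e; case: (ltngtP j k) => hjk.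
- by rewrite ltnS ltnW // ?(ltn_eqF hjk).
- by rewrite ltnS leqNgt hjk /= ?(gtn_eqF hjk).
- by rewrite hjk ?eqxx ltnSn; congr (snapshot_target _ _ _ _ _); apply: val_inj; rewrite /= hs'.
- by rewrite ltnS ltnW // ?(ltn_eqF hjk).
- by rewrite ltnS leqNgt hjk /= ?(gtn_eqF hjk).
- by rewrite hjk ?eqxx ltnSn.
Qed.

Lemma round n (h : (0 < n)%N) algo M frame pos0 r :
  exec algo M frame (schedn h) pos0 (r * n.*2) =
  St (iter r (snapshot_target algo M frame) pos0) (fun _ => None).
Proof.
elim: r => [|r IH] //=.
have hm : n %| r * n.*2 by rewrite -muln2 mulnCA dvdn_mulr.
have -> : r.+1 * n.*2 = r * n.*2 + n + n by rewrite -!muln2; lia.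
rewrite (move hm IH (leqnn n)).
by congr St; apply: functional_extensionality => j; rewrite ltn_ord.
Qed.

Lemma core n M (pos0 : 'I_n -> node) algo (g : gaut) :
  (0 < n)%N -> injective pos0 ->
  (forall v, gapp g (gapp g v) = v) ->
  (forall v, lin (g_lin g) (lin (g_lin g) v) = v) ->
  sym_conf M pos0 g ->
  (forall v, gapp g v = v -> lam pos0 v = 0%N) ->
  solves_gathering algo M pos0 -> exists w, weber M pos0 w /\ gapp g w = w.
Proof.
move=> hn inj0 ginv Linv [symM symL] nofix sol.
have lampos : forall P (i : 'I_n), (0 < lam P (P i))%N.
  by move=> P i; apply/card_gt0P; exists i; rewrite inE.
have hs : forall i, exists j, pos0 j = gapp g (pos0 i).
  move=> i; have := lampos pos0 i; rewrite -symL => /card_gt0P [j].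
  by rewrite inE => /eqP <-; exists j.
have [s Hs] := fin_all_exists hs.
have ss : forall i, s (s i) = i by move=> i; apply: inj0; rewrite !Hs ginv.
have sneq : forall i, s i <> i.
  move=> i e; have := lampos pos0 i; rewrite nofix //.
  by rewrite -Hs e.
pose frame (i : 'I_n) := if (i < s i)%N then (false, false, false) else g_lin g.
have hframe : forall i u, lin (frame (s i)) u = lin (g_lin g) (lin (frame i) u).
  move=> i u; rewrite /frame ss.
  case: (ltngtP i (s i)) => h.
  - by rewrite lin_id.
  - by rewrite Linv lin_id.
  - by case: (sneq i); apply: val_inj.
pose Sym (P : 'I_n -> node) := forall i, P (s i) = gapp g (P i).
have lamSym : forall P, Sym P -> forall v, lam P (gapp g v) = lam P v.
  move=> P HP v; rewrite /lam.
  transitivity #|[preim s of [pred j | P j == gapp g v]]|.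
    rewrite (card_preim (can_inj ss)).
    have E : [pred j | P j == gapp g v] =i [predI codom s & [pred j | P j == gapp g v]].
      move=> j; rewrite !inE.
      have -> : j \in codom s by apply/codomP; exists (s j); rewrite ss.
      by [].
    by rewrite (eq_card E).
  have E : [preim s of [pred j | P j == gapp g v]] =i [pred j | P j == v].
    by move=> j; rewrite !inE HP (inj_eq (@gapp_inj g)).
  by rewrite (eq_card E).
have tgtSym : forall P, Sym P -> Sym (snapshot_target algo M frame P).
  move=> P HP i; rewrite /snapshot_target.
  have key : forall u, nadd (P (s i)) (lin (frame (s i)) u) = gapp g (nadd (P i) (lin (frame i) u)).
    by move=> u; rewrite hframe HP gapp_nadd.
  have -> : (fun v => lam P (nadd (P (s i)) (lin (frame (s i)) v))) =
            (fun v => lam P (nadd (P i) (lin (frame i) v))).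
    by apply: functional_extensionality => v; rewrite key lamSym.
  have -> : (fun v => nadd (P (s i)) (lin (frame (s i)) v) \in M) =
            (fun v => nadd (P i) (lin (frame i) v) \in M).
    by apply: functional_extensionality => v; rewrite key symM.
  by rewrite key.
have iterSym : forall r, Sym (iter r (snapshot_target algo M frame) pos0).
  by elim=> [|r IH] //=; apply: tgtSym.
have fairS : fair (schedn hn).
  move=> i t; exists (t * n + i)%N; split.
    by apply: leq_trans (leq_addr _ _); apply: leq_pmulr.
  by apply: val_inj => /=; rewrite modnMDl modn_small.
have [w [hw [T hT]]] := sol frame (schedn hn) fairS.
exists w; split => //.
have hT' := hT (T * n.*2)%N.
rewrite round in hT'.
have le : (T <= T * n.*2)%N by apply: leq_pmulr; rewrite double_gt0.
have e1 := hT' le (s (Ordinal hn)); have e2 := hT' le (Ordinal hn).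
rewrite /= in e1 e2.
by rewrite -{1}e2 -iterSym e1.
Qed.

Lemma Linv_of g : (forall v, gapp g (gapp g v) = v) ->
  forall v, lin (g_lin g) (lin (g_lin g) v) = v.
Proof.
move=> h v; have h0 := h (0%R, 0%R); have hv := h v.
move: h0 hv; rewrite /gapp !lin_add.
have E : lin (g_lin g) (0%R, 0%R) = (0%R, 0%R).
  by case: (g_lin g) => [[s nx] ny]; case: s; case: nx; case: ny; rewrite /lin /=; congr (_,_); lia.
rewrite !E.
case: (lin _ (lin _ v)) => a b; case: (lin _ (g_tr g)) => c d; case: (g_tr g) => p q.
case: v => x y; rewrite /nadd /= => [[e1 e2] [e3 e4]]; congr (_,_); lia.
Qed.

Lemma rot_cases f : is_rotation f ->
  (forall v, gapp f (gapp f v) = v) \/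
  exists g, [/\ (forall v, gapp g v = gapp f (gapp f v)),
     (forall v, gapp g (gapp g v) = v) & (forall v, gapp g v = v -> gapp f v = v)].
Proof.
case: f => [[[s nx] ny] [p q]]; rewrite /is_rotation /=.
case: s; case: nx; case: ny => /=; move=> [H1 H2].
all: try (exfalso; move: H1; done).
all: try (by case: H2).
- right; exists (GAut (false,true,true) (nadd (lin (true,true,false) (p,q)) (p,q))); split.
  + by move=> [a b]; rewrite /gapp /lin /nadd /=; congr (_,_); lia.
  + by move=> [a b]; rewrite /gapp /lin /nadd /=; congr (_,_); lia.
  + by move=> [a b]; rewrite /gapp /lin /nadd /= => [[e1 e2]]; congr (_,_); lia.
- right; exists (GAut (false,true,true) (nadd (lin (true,false,true) (p,q)) (p,q))); split.
  + by move=> [a b]; rewrite /gapp /lin /nadd /=; congr (_,_); lia.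
  + by move=> [a b]; rewrite /gapp /lin /nadd /=; congr (_,_); lia.
  + by move=> [a b]; rewrite /gapp /lin /nadd /= => [[e1 e2]]; congr (_,_); lia.
- left; by move=> [a b]; rewrite /gapp /lin /nadd /=; congr (_,_); lia.
Qed.

Theorem lemma2 (n : nat) (M : seq node) (pos0 : 'I_n -> node) :
  (0 < n)%N -> injective pos0 ->
  class_I3b3 M pos0 \/ class_I4b3 M pos0 ->
  forall algo : algorithm, ~ solves_gathering algo M pos0.
Proof.
move=> hn inj0 [[f [[_ finv] [_ [_ [_ [sc hfix]]]]]] | [f [rot _ _ sc hfix]]] algo sol.
- have [w [hw fw]] := core hn inj0 finv (Linv_of finv) sc (fun v e => (hfix v e).2) sol.
  by have := (hfix w fw).1; rewrite hw.
- have notw : forall w, weber M pos0 w -> gapp f w <> w.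
    by move=> w /andP [wM _] fw; have := (hfix w fw).1; rewrite wM.
  case: (rot_cases rot) => [finv | [g [gff ginv gfix]]].
    have [w [hw fw]] := core hn inj0 finv (Linv_of finv) sc (fun v e => (hfix v e).2) sol.
    exact: notw hw fw.
  case: sc => [sM sL].
  have scg : sym_conf M pos0 g by split => v; rewrite gff ?sM ?sL.
  have [w [hw gw]] := core hn inj0 ginv (Linv_of ginv) scg
     (fun v e => (hfix v (gfix v e)).2) sol.
  exact: notw hw (gfix w gw).
Qed.
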